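(* Let $\theta,\omega:[0,\varepsilon[\times\mathbb S^1\to\mathbb R$ be of class $C^1$, and write $\bar\theta(t)=\theta(0,t)$, $\bar\omega(t)=\omega(0,t)$. For $\mu\in[0,1]$ let $\varphi^\mu(r,t)=\mu\,\omega(r,t)+(1-\mu)\,\theta(r,t)$. Suppose that $\bar\theta_t<-\lambda_t\sin(2\bar\theta)$ and $\bar\omega(t)=\bar\theta(t)$ for all $t\in\mathbb S^1$. Then there is $\rho_0>0$ such that for all $\mu\in[0,1]$ the surface $H^\mu(r,t)=(r\,u_{\varphi^\mu(r,t)},t)$ is transversal to the vector field $Y$ at all points $(r,t)$ with $0<r<\rho_0$, $t\in\mathbb S^1$.
   Context: $\mathbb S^1=\mathbb R/\mathbb Z$, $u_\beta=(\cos\beta,\sin\beta)\in\mathbb R^2$. In coordinates $(x,y,t)\in\mathbb D_\varepsilon\times\mathbb S^1$ around a period-1 hyperbolic periodic orbit $\Gamma=\{(0,0,t)\}$ of a Reeb flow (with $x$, $y$ axes along the unstable and stable directions), $Y$ is the reparametrization $Y=X/f_3$ of the Reeb vector field $X=(f_1,f_2,f_3)$, so that $Y(x,y,t)=(\lambda_tx,-\lambda_ty,1)+O(x^2+y^2)$ in the first two components and third component $1$, where $t\mapsto\lambda_t$ is a 1-periodic function. Subscripts $t$ and $r$ denote partial derivatives. *)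

(* Defs.v *)
From Stdlib Require Import Reals.
From Coquelicot Require Import Coquelicot.
Open Scope R_scope.

(* The half-closed cylinder [0,eps[ x R (R standing for the universal cover
   of S^1 = R/Z; functions on S^1 are 1-periodic functions on R). *)
Definition half_cyl (eps r t : R) : Prop := 0 <= r < eps.

Definition cont_on (D : R -> R -> Prop) (f : R -> R -> R) : Prop :=
  forall r t, D r t -> forall e, 0 < e -> exists d, 0 < d /\
    forall r' t', D r' t' -> Rabs (r' - r) < d -> Rabs (t' - t) < d ->
      Rabs (f r' t' - f r t) < e.

Definition periodic_on (eps : R) (f : R -> R -> R) : Prop :=
  forall r t, 0 <= r < eps -> f r (t + 1) = f r t.

Definition C1_half (eps : R) (f : R -> R -> R) : Prop :=
  periodic_on eps f /\
  cont_on (half_cyl eps) f /\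
  exists fr ft : R -> R -> R,
    (forall r t, 0 <= r < eps -> is_derive (fun t' => f r t') t (ft r t)) /\
    (forall r t, 0 < r < eps -> is_derive (fun r' => f r' t) r (fr r t)) /\
    cont_on (half_cyl eps) fr /\ cont_on (half_cyl eps) ft.

Definition phimu (mu : R) (theta omega : R -> R -> R) (r t : R) : R :=
  mu * omega r t + (1 - mu) * theta r t.

Definition H1 (phi : R -> R -> R) (r t : R) : R := r * cos (phi r t).
Definition H2 (phi : R -> R -> R) (r t : R) : R := r * sin (phi r t).
Definition H3 (phi : R -> R -> R) (r t : R) : R := t.

(* The vector field Y = (Y1, Y2, 1) is transversal to the surface H at the
   parameter point (r,t): the tangent plane span(H_r, H_t) together with
   Y(H(r,t)) spans R^3. *)
Definition transversal_at (Y1 Y2 : R -> R -> R -> R)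
    (phi : R -> R -> R) (r t : R) : Prop :=
  let x := H1 phi r t in let y := H2 phi r t in let z := H3 phi r t in
  let a1 := Derive (fun r' => H1 phi r' t) r in
  let a2 := Derive (fun r' => H2 phi r' t) r in
  let a3 := Derive (fun r' => H3 phi r' t) r in
  let b1 := Derive (fun t' => H1 phi r t') t in
  let b2 := Derive (fun t' => H2 phi r t') t in
  let b3 := Derive (fun t' => H3 phi r t') t in
  let c1 := Y1 x y z in let c2 := Y2 x y z in let c3 := 1 in
  forall v1 v2 v3 : R, exists a b c : R,
    v1 = a * a1 + b * b1 + c * c1 /\
    v2 = a * a2 + b * b2 + c * c2 /\
    v3 = a * a3 + b * b3 + c * c3.

(* Main.v *)
Require Import Defs.
From Stdlib Require Import Reals Lra.
From Coquelicot Require Import Coquelicot.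
Open Scope R_scope.

Lemma abs_sin_pos x : 0 < x -> Rabs (sin x) <= x.
Proof.
  intro H. assert (sin x < x) by (apply sin_lt_x; lra).
  apply Rabs_le; split; try lra.
  destruct (Rle_lt_dec 1 x).
  - pose proof (SIN_bound x); lra.
  - assert (0 < sin x); [|lra]. apply sin_gt_0; try lra.
    pose proof PI2_1; lra.
Qed.

Lemma abs_sin_le x : Rabs (sin x) <= Rabs x.
Proof.
  destruct (Rtotal_order x 0) as [H|[H|H]].
  - assert (Hx: 0 < -x) by lra; pose proof (abs_sin_pos (-x) Hx). rewrite sin_neg, Rabs_Ropp in H0.
    rewrite (Rabs_left x); lra.
  - subst. rewrite sin_0, Rabs_R0. lra.
  - rewrite (Rabs_right x) by lra. now apply abs_sin_pos.
Qed.

Lemma sin_lip a b : Rabs (sin a - sin b) <= Rabs (a - b).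
Proof.
  rewrite form4, Rabs_mult, Rabs_mult.
  pose proof (abs_sin_le ((a-b)/2)).
  pose proof (COS_bound ((a+b)/2)).
  assert (Rabs (cos ((a+b)/2)) <= 1) by (apply Rabs_le; lra).
  replace (Rabs ((a-b)/2)) with (Rabs (a-b) / 2) in H.
  2:{ unfold Rdiv. rewrite Rabs_mult, Rabs_inv, (Rabs_right 2) by lra; reflexivity. }
  rewrite Rabs_right by lra.
  pose proof (Rabs_pos (sin ((a - b) / 2))).
  pose proof (Rabs_pos (cos ((a + b) / 2))).
  nra.
Qed.

Lemma per_red (P : R -> Prop) :
  (forall t, P t -> P (t+1)) -> (forall t, P (t+1) -> P t) ->
  (forall t, 0 <= t <= 1 -> P t) -> forall t, P t.
Proof.
  intros Hu Hd H0.
  assert (forall n, forall t, - INR n <= t <= INR n + 1 -> P t).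
  { induction n; intros t Ht.
    - apply H0. simpl in Ht. lra.
    - rewrite S_INR in Ht.
      destruct (Rle_lt_dec t (INR n + 1)); destruct (Rle_lt_dec (- INR n) t).
      + apply IHn; lra.
      + apply Hd. apply IHn. pose proof (pos_INR n). lra.
      + replace t with ((t - 1) + 1) by ring. apply Hu. apply IHn.
        pose proof (pos_INR n). lra.
      + pose proof (pos_INR n). lra. }
  intro t. destruct (INR_unbounded (Rabs t)) as [n Hn].
  apply (H n).
  pose proof (Rle_abs t). pose proof (Rle_abs (-t)). rewrite Rabs_Ropp in H2. lra.
Qed.

Lemma unif01 (P : R -> R -> Prop) :
  (forall d d' t, 0 < d' <= d -> P d t -> P d' t) ->
  (forall t, 0 <= t <= 1 -> exists d, 0 < d /\ exists eta, 0 < eta /\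
      forall t', Rabs (t' - t) < eta -> P d t') ->
  exists d, 0 < d /\ forall t, 0 <= t <= 1 -> P d t.
Proof.
  intros Hmon Hloc.
  set (E := fun s => 0 <= s <= 1 /\ exists d, 0 < d /\ forall t, 0 <= t <= s -> P d t).
  assert (HE0 : E 0).
  { destruct (Hloc 0) as [d [Hd [eta [Heta H]]]]; [lra|].
    split; [lra|]. exists d; split; auto. intros t Ht.
    replace t with 0 by lra. apply H. rewrite Rminus_0_r, Rabs_R0; lra. }
  assert (Hb : bound E). { exists 1. intros x Hx. apply Hx. }
  destruct (completeness E Hb (ex_intro _ 0 HE0)) as [c [Hub Hlub]].
  assert (Hc0 : 0 <= c) by (apply Hub; auto).
  assert (Hc1 : c <= 1) by (apply Hlub; intros x Hx; apply Hx).
  destruct (Hloc c) as [dc [Hdc [eta [Heta Hc]]]]; [lra|].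
  assert (exists s, E s /\ c - eta < s).
  { apply Classical_Pred_Type.not_all_not_ex. intro Hn.
    assert (c <= c - eta); [|lra].
    apply Hlub. intros x Hx. destruct (Rle_lt_dec x (c - eta)); auto.
    exfalso; apply (Hn x); auto. }
  destruct H as [s [[Hs01 [ds [Hds Hs]]] Hsc]].
  assert (Hs_le : s <= c) by (apply Hub; split; [auto| exists ds; auto]).
  set (s' := Rmin (c + eta/2) 1).
  assert (Es' : E s').
  { split. { unfold s'. split; [apply Rmin_case; lra | apply Rmin_r]. }
    exists (Rmin ds dc). split. { apply Rmin_case; lra. }
    intros t Ht. destruct (Rle_lt_dec t s).
    - apply (Hmon ds). split; [apply Rmin_case; lra| apply Rmin_l]. apply Hs; lra.
    - apply (Hmon dc). split; [apply Rmin_case; lra| apply Rmin_r]. apply Hc.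
      assert (t <= c + eta/2) by (pose proof (Rmin_l (c+eta/2) 1); unfold s' in Ht; lra).
      apply Rabs_lt_between'; lra. }
  assert (s' <= c) by (apply Hub; auto).
  assert (s' = 1).
  { unfold s' in *. revert H. apply Rmin_case_strong; intros; lra. }
  destruct Es' as [_ [d [Hd Hd']]].
  exists d. split; auto. intros t Ht. apply Hd'. lra.
Qed.

Lemma cont_slice eps f : 0 < eps -> cont_on (half_cyl eps) f ->
  forall t, continuity_pt (fun s => f 0 s) t.
Proof.
  intros He Hc t. unfold continuity_pt, continue_in, limit1_in, limit_in. simpl. unfold R_dist.
  intros e He'. destruct (Hc 0 t) with (e := e) as [d [Hd H]]; [unfold half_cyl; lra | lra |].
  exists d. split; [lra|]. intros x [_ Hx]. apply H; auto. unfold half_cyl; lra.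
  rewrite Rminus_0_r, Rabs_R0; lra.
Qed.

Lemma deriv_per (h : R -> R) l1 l2 t : (forall s, h (s+1) = h s) ->
  is_derive h (t+1) l1 -> is_derive h t l2 -> l1 = l2.
Proof.
  intros Hp H1 H2.
  assert (Hs : is_derive (fun s => s + 1) t 1) by (auto_derive; auto; ring).
  pose proof (is_derive_comp h (fun s => s+1) t l1 1 H1 Hs) as H3.
  apply (is_derive_ext _ h) in H3; [| intro; simpl; apply Hp].
  apply is_derive_unique in H3. apply is_derive_unique in H2.
  rewrite H2 in H3. rewrite H3. unfold scal; simpl. unfold mult; simpl. symmetry; apply Rmult_1_l.
Qed.

Lemma deriv_per_r (f : R -> R -> R) eps r t l1 l2 :
  0 < r < eps -> periodic_on eps f ->
  is_derive (fun r' => f r' (t+1)) r l1 -> is_derive (fun r' => f r' t) r l2 -> l1 = l2.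
Proof.
  intros Hr Hp H1 H2.
  apply (is_derive_ext_loc _ (fun r' => f r' t)) in H1.
  - apply is_derive_unique in H1. apply is_derive_unique in H2. congruence.
  - assert (Hpos : 0 < Rmin r (eps - r)) by (apply Rmin_case; lra).
    exists (mkposreal _ Hpos). intros y Hy. simpl in Hy.
    unfold ball in Hy; simpl in Hy; unfold AbsRing_ball, abs, minus, plus, opp in Hy; simpl in Hy.
    apply Hp. pose proof (Rmin_l r (eps - r)). pose proof (Rmin_r r (eps - r)).
    apply Rabs_lt_between' in Hy. lra.
Qed.

Lemma close01 eps f : 0 < eps -> cont_on (half_cyl eps) f ->
  forall e, 0 < e -> exists d, 0 < d /\ d <= eps /\
    forall t, 0 <= t <= 1 -> forall r, 0 <= r < d -> Rabs (f r t - f 0 t) < e.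
Proof.
  intros He Hc e Hee.
  destruct (unif01 (fun d t => forall r, 0 <= r < d -> Rabs (f r t - f 0 t) < e)) as [d [Hd H]].
  - intros d d' t Hd' H r Hr. apply H. lra.
  - intros t Ht. destruct (Hc 0 t) with (e := e/2) as [del [Hdel H]];
      [unfold half_cyl; lra | lra |].
    exists (Rmin del eps). split; [apply Rmin_case; lra|].
    exists del. split; auto. intros t' Ht' r Hr.
    pose proof (Rmin_l del eps). pose proof (Rmin_r del eps).
    assert (A1 : Rabs (f r t' - f 0 t) < e/2).
    { apply H; [unfold half_cyl; lra| |auto]. rewrite Rminus_0_r, Rabs_right; lra. }
    assert (A2 : Rabs (f 0 t' - f 0 t) < e/2).
    { apply H; [unfold half_cyl; lra| |auto]. rewrite Rminus_0_r, Rabs_R0; lra. }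
    replace (f r t' - f 0 t') with ((f r t' - f 0 t) - (f 0 t' - f 0 t)) by ring.
    eapply Rle_lt_trans; [apply Rabs_triang|]. rewrite Rabs_Ropp. lra.
  - exists (Rmin d eps). split; [apply Rmin_case; lra|]. split; [apply Rmin_r|].
    intros t Ht r Hr. apply H; auto. pose proof (Rmin_l d eps). lra.
Qed.

Lemma close_all eps f : 0 < eps -> periodic_on eps f -> cont_on (half_cyl eps) f ->
  forall e, 0 < e -> exists d, 0 < d /\ d <= eps /\
    forall t r, 0 <= r < d -> Rabs (f r t - f 0 t) < e.
Proof.
  intros He Hp Hc e Hee. destruct (close01 eps f He Hc e Hee) as [d [Hd [Hde H]]].
  exists d. split; auto. split; auto.
  apply (per_red (fun t => forall r, 0 <= r < d -> Rabs (f r t - f 0 t) < e)).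
  - intros t Ht r Hr. rewrite !Hp by lra. auto.
  - intros t Ht r Hr. specialize (Ht r Hr). rewrite !Hp in Ht by lra. auto.
  - intros t Ht r Hr. auto.
Qed.

Lemma bound_fr eps fr : 0 < eps -> cont_on (half_cyl eps) fr ->
  (forall r t, 0 < r < eps -> fr r (t+1) = fr r t) ->
  exists K d, 0 < d /\ d <= eps /\ forall t r, 0 < r < d -> Rabs (fr r t) <= K.
Proof.
  intros He Hc Hp.
  destruct (continuity_ab_maj (fun s => Rabs (fr 0 s)) 0 1) as [M [HM _]]; [lra| |].
  { intros c _. apply (continuity_pt_comp (fun s => fr 0 s) Rabs).
    - apply (cont_slice eps); auto.
    - apply Rcontinuity_abs. }
  destruct (close01 eps fr He Hc 1 Rlt_0_1) as [d [Hd [Hde H]]].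
  exists (Rabs (fr 0 M) + 1), d. split; auto. split; auto.
  apply (per_red (fun t => forall r, 0 < r < d -> Rabs (fr r t) <= Rabs (fr 0 M) + 1)).
  - intros t Ht r Hr. rewrite Hp by lra. auto.
  - intros t Ht r Hr. specialize (Ht r Hr). rewrite Hp in Ht by lra. auto.
  - intros t Ht r Hr. specialize (H t Ht r ltac:(lra)). specialize (HM t Ht). simpl in HM.
    pose proof (Rabs_triang_inv (fr r t) (fr 0 t)). lra.
Qed.
Lemma key_ineq r pt lt s2 c2p pr e1 e2 a1 a2 m L K Ca :
  0 < r < 1 -> 0 < m -> 0 <= L -> 0 <= K -> 0 <= Ca ->
  pt + lt * s2 <= - m / 2 -> Rabs lt <= L -> Rabs pr <= K -> Rabs c2p <= 1 ->
  Rabs a1 <= 1 + r * K -> Rabs a2 <= 1 + r * K ->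
  Rabs e1 <= Ca * r^2 -> Rabs e2 <= Ca * r^2 ->
  r * (L * K + 2 * (1 + K) * Ca) <= m / 4 ->
  r * (pt + lt * s2 + r * lt * pr * c2p) + (a2 * e1 - a1 * e2) < 0.
Proof.
  intros Hr Hm HL HK HC H1 H2 H3 H4 H5 H6 H7 H8 H9.
  assert (B1 : Rabs (lt * pr * c2p) <= L * K).
  { rewrite !Rabs_mult. pose proof (Rabs_pos lt). pose proof (Rabs_pos pr).
    pose proof (Rabs_pos c2p).
    apply Rle_trans with (L * K * 1); [|lra].
    apply Rmult_le_compat; try nra. }
  assert (B2 : Rabs (a2 * e1) <= (1 + K) * (Ca * r^2)).
  { rewrite Rabs_mult. apply Rmult_le_compat; try apply Rabs_pos; nra. }
  assert (B3 : Rabs (a1 * e2) <= (1 + K) * (Ca * r^2)).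
  { rewrite Rabs_mult. apply Rmult_le_compat; try apply Rabs_pos; nra. }
  pose proof (Rle_abs (lt * pr * c2p)). pose proof (Rle_abs (a2 * e1)).
  pose proof (Rle_abs (- (a1 * e2))) as H0'. rewrite Rabs_Ropp in H0'.
  assert (r * (pt + lt * s2 + r * lt * pr * c2p) + (a2 * e1 - a1 * e2)
     <= r * (- m/2) + r * (r * (L * K + 2 * (1 + K) * Ca))).
  { assert (r * (r * lt * pr * c2p) <= r * (r * (L*K))).
    { replace (r * lt * pr * c2p) with (r * (lt * pr * c2p)) by ring. nra. }
    assert (r * (pt + lt * s2) <= r * (-m/2)) by nra.
    assert (a2 * e1 - a1 * e2 <= 2 * (1+K) * Ca * (r * r)) by (simpl in B2, B3; nra).
    nra. }
  nra.
Qed.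

Lemma solve3 a1 a2 b1 b2 c1 c2 : a1*(b2 - c2) - a2*(b1 - c1) <> 0 ->
  forall v1 v2 v3, exists a b c, v1 = a*a1 + b*b1 + c*c1 /\ v2 = a*a2+b*b2+c*c2 /\
    v3 = a*0 + b*1 + c*1.
Proof.
  intros HD v1 v2 v3.
  set (D' := a1*(c2-b2) - a2*(c1-b1)).
  assert (D' <> 0) by (unfold D'; intro; apply HD; lra).
  set (a := ((v1 - v3*b1)*(c2-b2) - (v2 - v3*b2)*(c1-b1))/D').
  set (c := (a1*(v2 - v3*b2) - a2*(v1 - v3*b1))/D').
  exists a, (v3 - c), c. unfold a, c, D' in *. split; [|split]; field; auto.
Qed.

Lemma min2 a b : 0 < a -> 0 < b -> exists c, 0 < c /\ c <= a /\ c <= b.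
Proof. intros. exists (Rmin a b). split; [apply Rmin_case; lra|]. split; [apply Rmin_l|apply Rmin_r]. Qed.

Theorem lemma3p3
  (lam : R -> R) (Y1 Y2 : R -> R -> R -> R) (eps : R)
  (theta omega : R -> R -> R) :
  (forall t, lam (t + 1) = lam t) ->
  (forall t, continuity_pt lam t) ->
  (exists C d, 0 < d /\ forall x y t, x ^ 2 + y ^ 2 < d ->
      Rabs (Y1 x y t - lam t * x) <= C * (x ^ 2 + y ^ 2) /\
      Rabs (Y2 x y t + lam t * y) <= C * (x ^ 2 + y ^ 2)) ->
  0 < eps ->
  C1_half eps theta -> C1_half eps omega ->
  (forall t, Derive (fun s => theta 0 s) t < - lam t * sin (2 * theta 0 t)) ->
  (forall t, omega 0 t = theta 0 t) ->
  exists rho0, 0 < rho0 /\ rho0 <= eps /\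
    forall mu, 0 <= mu <= 1 -> forall r t, 0 < r < rho0 ->
      transversal_at Y1 Y2 (phimu mu theta omega) r t.
Proof.
  intros Hlp Hlc [C [dY [HdY HY]]] He
    [Pth [Cth [thr [tht [Dtht [Dthr [Cthr Ctht]]]]]]]
    [Pom [Com [omr [omt [Domt [Domr [Comr Comt]]]]]]] Hg Heq.
  assert (Ptht : periodic_on eps tht).
  { intros r t Hr. apply (deriv_per (fun s => theta r s) _ _ t); auto.
    }
  assert (Pomt : periodic_on eps omt).
  { intros r t Hr. apply (deriv_per (fun s => omega r s) _ _ t); auto.
    }
  assert (Pthr : forall r t, 0 < r < eps -> thr r (t+1) = thr r t).
  { intros r t Hr. apply (deriv_per_r theta eps r t); auto; apply Dthr; auto. }
  assert (Pomr : forall r t, 0 < r < eps -> omr r (t+1) = omr r t).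
  { intros r t Hr. apply (deriv_per_r omega eps r t); auto; apply Domr; auto. }
  assert (Eqt : forall t, omt 0 t = tht 0 t).
  { intro t. assert (H := Domt 0 t ltac:(lra)).
    apply (is_derive_ext _ (fun s => theta 0 s)) in H; [|intro; apply Heq].
    apply is_derive_unique in H. rewrite <- H. apply is_derive_unique. apply Dtht. lra. }
  assert (Dg : forall t, Derive (fun s => theta 0 s) t = tht 0 t).
  { intro t. apply is_derive_unique. apply Dtht. lra. }
  destruct (continuity_ab_maj (fun s => Rabs (lam s)) 0 1) as [Ml [HMl _]]; [lra| |].
  { intros c _. apply (continuity_pt_comp lam Rabs); auto. apply Rcontinuity_abs. }
  set (L := Rabs (lam Ml)).
  assert (HL0 : 0 <= L) by apply Rabs_pos.
  assert (HL : forall t, Rabs (lam t) <= L).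
  { apply per_red.
    - intros t H. rewrite Hlp. auto.
    - intros t H. rewrite Hlp in H. auto.
    - intros t Ht. apply (HMl t Ht). }
  set (g := fun t => tht 0 t + lam t * sin (2 * theta 0 t)).
  destruct (continuity_ab_maj g 0 1) as [Mg [HMg HMg01]]; [lra| |].
  { intros c _. unfold g. apply continuity_pt_plus.
    - apply (cont_slice eps); auto.
    - apply continuity_pt_mult; auto.
      apply (continuity_pt_comp (fun s => 2 * theta 0 s) sin).
      + apply continuity_pt_mult. apply continuity_pt_const. intros a b; auto.
        apply (cont_slice eps); auto.
      + apply continuity_sin. }
  set (m := - g Mg).
  assert (Hm : 0 < m).
  { unfold m, g. specialize (Hg Mg). rewrite Dg in Hg. lra. }
  assert (Hgm : forall t, g t <= - m).
  { apply per_red.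
    - intros t H. unfold g in *. rewrite Hlp, Ptht, Pth by lra. auto.
    - intros t H. unfold g in *. rewrite Hlp, Ptht, Pth in H by lra. auto.
    - intros t Ht. unfold m. rewrite Ropp_involutive. apply HMg; auto. }
  set (del := m / (4 * (1 + L))).
  assert (Hdel : 0 < del) by (unfold del; apply Rdiv_lt_0_compat; lra).
  destruct (close_all eps theta He Pth Cth del Hdel) as [d1 [Hd1 [_ Hc1]]].
  destruct (close_all eps omega He Pom Com del Hdel) as [d2 [Hd2 [_ Hc2]]].
  destruct (close_all eps tht He Ptht Ctht del Hdel) as [d3 [Hd3 [_ Hc3]]].
  destruct (close_all eps omt He Pomt Comt del Hdel) as [d4 [Hd4 [_ Hc4]]].
  destruct (bound_fr eps thr He Cthr Pthr) as [K1 [d5 [Hd5 [Hd5e Hb5]]]].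
  destruct (bound_fr eps omr He Comr Pomr) as [K2 [d6 [Hd6 [Hd6e Hb6]]]].
  set (K := Rabs K1 + Rabs K2).
  set (Ca := Rabs C).
  set (A := L * K + 2 * (1 + K) * Ca).
  assert (HK : 0 <= K) by (unfold K; pose proof (Rabs_pos K1); pose proof (Rabs_pos K2); lra).
  assert (HCa : 0 <= Ca) by apply Rabs_pos.
  assert (HA : 0 <= A) by (unfold A; nra).
  set (rho3 := m / (4 * (A + 1))).
  assert (Hrho3 : 0 < rho3) by (unfold rho3; apply Rdiv_lt_0_compat; lra).
  set (rho0 := Rmin eps (Rmin d1 (Rmin d2 (Rmin d3 (Rmin d4 (Rmin d5 (Rmin d6 (Rmin rho3 (Rmin 1 dY))))))))).
  exists rho0. split.
  { unfold rho0. repeat apply Rmin_pos; lra. }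
  split. { apply Rmin_l. }
  intros mu Hmu r t [Hr0 Hr].
  unfold rho0 in Hr.
  repeat match goal with H : _ < Rmin _ _ |- _ => apply Rmin_Rgt in H; destruct H | H : Rmin _ _ > _ |- _ => apply Rmin_Rgt in H; destruct H end.
  set (P := phimu mu theta omega).
  set (p := P r t).
  set (pr := mu * omr r t + (1 - mu) * thr r t).
  set (pt := mu * omt r t + (1 - mu) * tht r t).
  assert (HPr : is_derive (fun r' => P r' t) r pr).
  { unfold P, phimu, pr. auto_derive.
    - split; [exists (omr r t); apply Domr; lra | split; [exists (thr r t); apply Dthr; lra | auto]].
    - replace (Derive (fun x => omega x t) r) with (omr r t)
        by (symmetry; apply is_derive_unique; apply Domr; lra).
      replace (Derive (fun x => theta x t) r) with (thr r t)
        by (symmetry; apply is_derive_unique; apply Dthr; lra). ring. }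
  assert (HPt : is_derive (fun t' => P r t') t pt).
  { unfold P, phimu, pt. auto_derive.
    - split; [exists (omt r t); apply Domt; lra | split; [exists (tht r t); apply Dtht; lra | auto]].
    - replace (Derive (fun x => omega r x) t) with (omt r t)
        by (symmetry; apply is_derive_unique; apply Domt; lra).
      replace (Derive (fun x => theta r x) t) with (tht r t)
        by (symmetry; apply is_derive_unique; apply Dtht; lra). ring. }
  assert (HPdef : forall r t, P r t = phimu mu theta omega r t) by reflexivity.
  clearbody P.
  unfold transversal_at. cbv zeta.
  replace (Derive (fun r' => Defs.H1 P r' t) r) with (cos p - r * sin p * pr).
  2:{ symmetry. apply is_derive_unique. unfold Defs.H1. auto_derive.
      - exists pr; auto.
      - replace (Derive (fun x => P x t) r) with pr
          by (symmetry; apply is_derive_unique; exact HPr). unfold p. ring. }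
  replace (Derive (fun r' => Defs.H2 P r' t) r) with (sin p + r * cos p * pr).
  2:{ symmetry. apply is_derive_unique. unfold Defs.H2. auto_derive.
      - exists pr; auto.
      - replace (Derive (fun x => P x t) r) with pr
          by (symmetry; apply is_derive_unique; exact HPr). unfold p. ring. }
  replace (Derive (fun t' => Defs.H1 P r t') t) with (- (r * sin p * pt)).
  2:{ symmetry. apply is_derive_unique. unfold Defs.H1. auto_derive.
      - exists pt; auto.
      - replace (Derive (fun x => P r x) t) with pt
          by (symmetry; apply is_derive_unique; exact HPt). unfold p. ring. }
  replace (Derive (fun t' => Defs.H2 P r t') t) with (r * cos p * pt).
  2:{ symmetry. apply is_derive_unique. unfold Defs.H2. auto_derive.
      - exists pt; auto.
      - replace (Derive (fun x => P r x) t) with pt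
          by (symmetry; apply is_derive_unique; exact HPt). unfold p. ring. }
  unfold Defs.H3. rewrite Derive_const.
  change (Derive (fun t' => t') t) with (Derive id t). rewrite Derive_id.
  unfold Defs.H1, Defs.H2. fold p.
  apply solve3.
  assert (cs : cos p * cos p + sin p * sin p = 1)
    by (pose proof (sin2_cos2 p); unfold Rsqr in *; lra).
  set (x := r * cos p). set (y := r * sin p). set (lt := lam t).
  assert (Hxy : x ^ 2 + y ^ 2 = r ^ 2)
    by (unfold x, y; simpl; replace (r * (r * 1)) with (r * r * (cos p * cos p + sin p * sin p)) by (rewrite cs; ring); ring).
  assert (Hr2 : x ^ 2 + y ^ 2 < dY) by (rewrite Hxy; simpl; nra).
  destruct (HY x y t Hr2) as [HY1 HY2]. rewrite Hxy in HY1, HY2. fold lt in HY1, HY2.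
  set (e1 := Y1 x y t - lt * x) in *. set (e2 := Y2 x y t + lt * y) in *.
  assert (HC : C <= Ca) by apply Rle_abs.
  assert (HY1' : Rabs e1 <= Ca * r^2) by (pose proof (pow2_ge_0 r); nra).
  assert (HY2' : Rabs e2 <= Ca * r^2) by (pose proof (pow2_ge_0 r); nra).
  replace (Y1 x y t) with (e1 + lt * x) by (unfold e1; ring).
  replace (Y2 x y t) with (e2 - lt * y) by (unfold e2; ring).
  set (a1 := cos p - y * pr). set (a2 := sin p + x * pr).
  replace (a1 * (x * pt - (e2 - lt * y)) - a2 * (- (y * pt) - (e1 + lt * x)))
    with (r * (pt + lt * sin (2 * p) + r * lt * pr * cos (2 * p)) + (a2 * e1 - a1 * e2)).
  2:{ rewrite sin_2a, cos_2a. unfold a1, a2, x, y.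
      transitivity (r * pt * (cos p * cos p + sin p * sin p) + r * lt * (2 * sin p * cos p)
        + r * r * lt * pr * (cos p * cos p - sin p * sin p) + (a2 * e1 - a1 * e2)).
      - rewrite cs. unfold a1, a2, x, y. ring.
      - unfold a1, a2, x, y. ring. }
  apply Rlt_not_eq.
  assert (Hpr : Rabs pr <= K).
  { specialize (Hb5 t r ltac:(lra)). specialize (Hb6 t r ltac:(lra)).
    pose proof (Rle_abs K1). pose proof (Rle_abs K2).
    unfold pr, K. eapply Rle_trans; [apply Rabs_triang|].
    rewrite !Rabs_mult, (Rabs_right mu), (Rabs_right (1 - mu)) by lra.
    pose proof (Rabs_pos (omr r t)). pose proof (Rabs_pos (thr r t)). nra. }
  assert (Hsc : Rabs (sin p) <= 1 /\ Rabs (cos p) <= 1).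
  { pose proof (SIN_bound p). pose proof (COS_bound p). split; apply Rabs_le; lra. }
  assert (Ha1 : Rabs a1 <= 1 + r * K).
  { unfold a1, y. unfold Rminus. eapply Rle_trans; [apply Rabs_triang|].
    rewrite Rabs_Ropp, !Rabs_mult, (Rabs_right r) by lra.
    destruct Hsc as [Hs Hc].
    assert (Rabs (sin p) * Rabs pr <= K)
      by (apply Rle_trans with (1*K); [apply Rmult_le_compat; auto; apply Rabs_pos | lra]).
    nra. }
  assert (Ha2 : Rabs a2 <= 1 + r * K).
  { unfold a2, x. eapply Rle_trans; [apply Rabs_triang|].
    rewrite !Rabs_mult, (Rabs_right r) by lra.
    destruct Hsc as [Hs Hc].
    assert (Rabs (cos p) * Rabs pr <= K)
      by (apply Rle_trans with (1*K); [apply Rmult_le_compat; auto; apply Rabs_pos | lra]).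
    nra. }
  assert (Hc2p : Rabs (cos (2 * p)) <= 1) by (pose proof (COS_bound (2*p)); apply Rabs_le; lra).
  assert (HrA : r * (L * K + 2 * (1 + K) * Ca) <= m / 4).
  { fold A. unfold rho3 in H6. apply Rlt_gt in H6.
    assert (r * (4 * (A + 1)) < m).
    { apply (Rmult_lt_compat_r (4 * (A + 1))) in H6; [|lra].
      unfold Rdiv in H6. rewrite Rmult_assoc, Rinv_l, Rmult_1_r in H6; lra. }
    nra. }
  assert (HS : pt + lt * sin (2 * p) <= - m / 2).
  { specialize (Hc1 t r ltac:(lra)). specialize (Hc2 t r ltac:(lra)).
    specialize (Hc3 t r ltac:(lra)). specialize (Hc4 t r ltac:(lra)).
    rewrite Heq in Hc2. rewrite Eqt in Hc4.
    apply Rabs_lt_between' in Hc1, Hc2, Hc3, Hc4.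
    assert (Hp : p = mu * omega r t + (1 - mu) * theta r t) by (unfold p; rewrite HPdef; reflexivity).
    assert (Hpb : Rabs (2 * p - 2 * theta 0 t) <= 2 * del).
    { rewrite Hp. apply Rabs_le. split; nra. }
    assert (Hptb : pt <= tht 0 t + del) by (unfold pt; nra).
    pose proof (sin_lip (2 * p) (2 * theta 0 t)).
    assert (Hlsin : Rabs (lt * (sin (2 * p) - sin (2 * theta 0 t))) <= L * (2 * del)).
    { rewrite Rabs_mult. apply Rmult_le_compat; try apply Rabs_pos; [apply HL| lra]. }
    pose proof (Rle_abs (lt * (sin (2 * p) - sin (2 * theta 0 t)))).
    specialize (Hgm t). unfold g in Hgm. fold lt in Hgm.
    assert (del * (4 * (1 + L)) = m).
    { unfold del. field. lra. }
    nra. }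
  apply (key_ineq r pt lt (sin (2 * p)) (cos (2 * p)) pr e1 e2 a1 a2 m L K Ca); auto; try lra.
  apply HL.
Qed.
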